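(* Let $\Gamma$ be a splice diagram satisfying the edge determinant condition. Then for all nodes $u,v,w$ of $\Gamma$ we have $\ell_{u,v}\,\ell_{u,w}\leq d_u\,\ell_{v,w}$, with equality if and only if $u$ lies on the geodesic $[v,w]$.
   Context: A splice diagram is a finite tree $\Gamma$ with at least one vertex of valency $\geq3$ and no vertex of valency $2$; vertices of valency $1$ are leaves, the others nodes. For each node $v$ and edge $e$ adjacent to $v$ a positive integer weight $d_{v,e}$ is given; $d_{v,u}:=d_{v,e}$ for $e$ the edge at $v$ on the geodesic $[v,u]$. The total weight of a node is $d_v=\prod_{e\ni v}d_{v,e}$. For distinct vertices $u,v$, $\ell_{u,v}$ is the product of all weights $d_{w,e}$ with $w$ a node on $[u,v]$ and $e$ an edge at $w$ not contained in $[u,v]$; $\ell_{v,v}:=d_v$. Edge determinant condition: $d_{u,v}d_{v,u}>\ell_{u,v}$ for each edge $[u,v]$ between two nodes. *)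

(* Defs.v *)
From mathcomp Require Import all_boot.
Set Implicit Arguments. Unset Strict Implicit. Unset Printing Implicit Defensive.

Section Splice.
Variable T : finType.
Variable e : rel T.
(* weight function: dw v u is the weight d_{v,e} at v of the edge e = {v,u},
   meaningful when v is a node and u is adjacent to v *)
Variable dw : T -> T -> nat.

Definition simple_path (x y : T) (p : seq T) : bool :=
  [&& path e x p, last x p == y & uniq (x :: p)].

Definition is_tree : Prop :=
  symmetric e /\ irreflexive e /\
  forall x y : T, exists! p : seq T, simple_path x y p.

Definition valency (v : T) : nat := #|[set u | e v u]|.
Definition is_leaf (v : T) : bool := valency v == 1.
Definition is_node (v : T) : bool := ~~ is_leaf v.

(* z lies on the geodesic [x,y] (the unique simple path from x to y).
   Simple paths have fewer than #|T| edges, so we quantify over tuples. *)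
Definition on_geod (x y z : T) : bool :=
  [exists n : 'I_#|T|.+1, exists p : n.-tuple T,
      simple_path x y p && (z \in x :: p)].

Definition edge_on_geod (x y a b : T) : bool :=
  [exists n : 'I_#|T|.+1, exists p : n.-tuple T,
      simple_path x y p &&
      (((a, b) \in zip (x :: p) p) || ((b, a) \in zip (x :: p) p))].

Definition dtot (v : T) : nat := \prod_(u | e v u) dw v u.

Definition ell (u v : T) : nat :=
  if u == v then dtot v else
  \prod_(w | is_node w && on_geod u v w)
     \prod_(n | e w n && ~~ edge_on_geod u v w n) dw w n.

Definition splice_diagram : Prop :=
  [/\ is_tree,
      exists v : T, 3 <= valency v,
      forall v : T, valency v != 2
    & forall v u : T, is_node v -> e v u -> 0 < dw v u].

Definition edge_determinant_condition : Prop :=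
  forall u v : T, is_node u -> is_node v -> e u v ->
    ell u v < dw u v * dw v u.

End Splice.

(* Main.v *)
Require Import Defs.
From mathcomp Require Import all_boot.
From mathcomp Require Import zify.
Set Implicit Arguments. Unset Strict Implicit. Unset Printing Implicit Defensive.

Section Geo.
Variable T : finType.
Variable e : rel T.
Hypothesis esym : symmetric e.
Hypothesis eirr : irreflexive e.
Hypothesis euniq : forall x y : T, exists! p : seq T, simple_path e x y p.

Lemma ex_gp x y : exists p, simple_path e x y p.
Proof. by case: (euniq x y) => p [Hp _]; exists p. Qed.

Definition gp x y : seq T := xchoose (ex_gp x y).

Lemma gpP x y : simple_path e x y (gp x y).
Proof. exact: xchooseP. Qed.

Lemma gpU x y p : simple_path e x y p -> p = gp x y.
Proof.
case: (euniq x y) => p0 [_ H] Hp.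
by rewrite -(H _ Hp) -(H _ (gpP x y)).
Qed.

Lemma gp_uniq x y : uniq (x :: gp x y).
Proof. by case/and3P: (gpP x y). Qed.

Lemma gp_last x y : last x (gp x y) = y.
Proof. by case/and3P: (gpP x y) => _ /eqP. Qed.

Lemma gp_path x y : path e x (gp x y).
Proof. by case/and3P: (gpP x y). Qed.

Lemma gp_size x y : size (gp x y) < #|T|.+1.
Proof.
have := gp_uniq x y => /card_uniqP H.
have := max_card (mem (x :: gp x y)); rewrite H /=; lia.
Qed.

Lemma on_geodE x y z : on_geod e x y z = (z \in x :: gp x y).
Proof.
apply/idP/idP.
  case/existsP=> n /existsP [p /andP [Hp Hz]].
  by rewrite -(gpU Hp).
move=> Hz; apply/existsP; exists (Ordinal (gp_size x y)); apply/existsP.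
exists (in_tuple (gp x y)); by rewrite /= gpP Hz.
Qed.

Lemma lastk (x : T) (p : seq T) k : k <= size p -> last x (take k p) = nth x (x :: p) k.
Proof.
move=> Hk; rewrite (last_nth x) size_takel //.
case: k Hk => [|k] Hk //=.
by rewrite nth_take.
Qed.

Lemma sp_prefix x y p k : simple_path e x y p -> k <= size p ->
  simple_path e x (nth x (x :: p) k) (take k p).
Proof.
case/and3P=> Hp _ Hu Hk; apply/and3P; split.
- exact: take_path.
- by rewrite lastk.
- by have := take_uniq k.+1 Hu.
Qed.

Lemma sp_suffix x y p k : simple_path e x y p -> k <= size p ->
  simple_path e (nth x (x :: p) k) y (drop k p).
Proof.
case/and3P=> Hp Hl Hu Hk; apply/and3P; split.
- by move: Hp; rewrite -{1}(cat_take_drop k p) cat_path lastk // => /andP[].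
- by rewrite -lastk // -last_cat cat_take_drop.
- by have := drop_uniq k Hu; rewrite (@drop_nth _ x k (x :: p)) /= ?ltnS.
Qed.


Lemma adj_idx x y i j : i < j -> j <= size (gp x y) ->
  e (nth x (x :: gp x y) i) (nth x (x :: gp x y) j) -> j = i.+1.
Proof.
move=> Hij Hj Hab.
set p := gp x y in Hj Hab *.
have H1 := sp_prefix (gpP x y) Hj; rewrite -/p in H1.
have Hi : i <= size (take j p) by rewrite size_takel //; lia.
have H2 := sp_suffix H1 Hi.
have Hn : nth x (x :: take j p) i = nth x (x :: p) i.
  by rewrite -[x :: take j p]/(take j.+1 (x :: p)) nth_take //; lia.
rewrite Hn in H2.
have Hab' : nth x (x :: p) i != nth x (x :: p) j.
  by apply/eqP=> E; move: Hab; rewrite E eirr.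
have H3 : simple_path e (nth x (x :: p) i) (nth x (x :: p) j) [:: nth x (x :: p) j].
  by rewrite /simple_path /= Hab eqxx inE Hab'.
have := gpU H3; rewrite -(gpU H2) => /(congr1 size) /=.
rewrite size_drop size_takel //; lia.
Qed.

Lemma adj_index x y a b : a \in x :: gp x y -> b \in x :: gp x y -> e a b ->
  index b (x :: gp x y) = (index a (x :: gp x y)).+1 \/
  index a (x :: gp x y) = (index b (x :: gp x y)).+1.
Proof.
set L := x :: gp x y => Ha Hb Hab.
have Ea := nth_index x Ha; have Eb := nth_index x Hb.
have Ia := index_mem a L; have Ib := index_mem b L.
rewrite Ha in Ia; rewrite Hb in Ib.
have SL : size L = (size (gp x y)).+1 by [].
rewrite SL ltnS in Ia; rewrite SL ltnS in Ib.
case: (ltngtP (index a L) (index b L)) => H.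
- left; apply: (@adj_idx x y _ _ H); first by [].
  by rewrite -/L Ea Eb.
- right; apply: (@adj_idx x y _ _ H); first by [].
  by rewrite -/L Ea Eb esym.
- by move: Hab; rewrite -Ea H Eb eirr.
Qed.

Lemma mem_pre x y z a : z \in x :: gp x y ->
  (a \in x :: gp x y) && (index a (x :: gp x y) <= index z (x :: gp x y))
  = (a \in x :: gp x z).
Proof.
set L := x :: gp x y => Hz.
have Ik : index z L <= size (gp x y) by rewrite -ltnS; have := index_mem z L; rewrite Hz.
have := gpU (sp_prefix (gpP x y) Ik).
rewrite -/L nth_index // => <-.
rewrite -[x :: take _ _]/(take (index z L).+1 L).
case Ha: (a \in L); rewrite ?andTb ?andFb.
  by rewrite in_take // ltnS.
by symmetry; apply/negbTE; apply: contraFN Ha => /mem_take.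
Qed.

Lemma mem_suf x y z a : z \in x :: gp x y ->
  (a \in x :: gp x y) && (index z (x :: gp x y) <= index a (x :: gp x y))
  = (a \in z :: gp z y).
Proof.
set L := x :: gp x y => Hz.
have Ik : index z L <= size (gp x y) by rewrite -ltnS; have := index_mem z L; rewrite Hz.
have := gpU (sp_suffix (gpP x y) Ik).
rewrite -/L nth_index // => <-.
have -> : z :: drop (index z L) (gp x y) = drop (index z L) L.
  by rewrite (@drop_nth _ x _ L) ?nth_index ?index_mem.
have HU : uniq L := gp_uniq x y.
rewrite -(cat_take_drop (index z L) L) cat_uniq in HU.
case/and3P: HU => _ HU _.
case Ha: (a \in L); rewrite ?andTb ?andFb.
  case Hd: (a \in drop (index z L) L).
    apply/idP; rewrite leqNgt -(in_take _ Ha); apply/negP => Ht.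
    by move/hasPn: HU => /(_ _ Hd); rewrite Ht.
  apply/negbTE; rewrite -ltnNge -(in_take _ Ha).
  by move: Ha; rewrite -{1}(cat_take_drop (index z L) L) mem_cat Hd orbF.
by symmetry; apply/negbTE; apply: contraFN Ha => /mem_drop.
Qed.


Lemma rev_cons_belast (x : T) p : last x p :: rev (belast x p) = rev (x :: p).
Proof. by rewrite [x :: p]lastI rev_rcons. Qed.

Lemma gp_rev x y : gp y x = rev (belast x (gp x y)).
Proof.
symmetry; apply: gpU; set p := gp x y.
rewrite /simple_path -(gp_last x y) -/p.
have Hr : last x p :: rev (belast x p) = rev (x :: p) by rewrite [x :: p]lastI rev_rcons.
apply/and3P; split.
- rewrite rev_path; have := gp_path x y; rewrite -/p.
  by rewrite (@eq_path _ _ e) // => a b; rewrite esym.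
- by rewrite -(last_cons x) Hr rev_cons last_rcons.
- by rewrite Hr rev_uniq gp_uniq.
Qed.

Lemma mem_geod_sym x y a : (a \in y :: gp y x) = (a \in x :: gp x y).
Proof.
rewrite gp_rev; have := rev_cons_belast x (gp x y); rewrite gp_last => ->.
by rewrite mem_rev.
Qed.

Lemma gp_refl x : gp x x = [::].
Proof. by symmetry; apply: gpU; rewrite /simple_path /= eqxx. Qed.

Lemma concat_geod c v w :
  (forall z, z \in c :: gp c v -> z \in c :: gp c w -> z = c) ->
  c \in v :: gp v w.
Proof.
move=> H.
have Hs : simple_path e v w (gp v c ++ gp c w).
  apply/and3P; split.
  - by rewrite cat_path gp_path gp_last gp_path.
  - by rewrite last_cat gp_last gp_last.
  - rewrite -cat_cons cat_uniq gp_uniq /=.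
    have := gp_uniq c w; rewrite cons_uniq => /andP [Hc ->]; rewrite andbT.
    apply/hasPn => z Hz; apply/negP => Hz2.
    rewrite mem_geod_sym in Hz2.
    have Ez : z = c by apply: H Hz2 _; rewrite inE Hz orbT.
    by subst z; rewrite Hz in Hc.
rewrite -(gpU Hs) -cat_cons mem_cat.
by rewrite mem_geod_sym mem_head.
Qed.


Lemma head_nb x y : x != y -> exists n, [/\ e x n, n \in gp x y & n != x].
Proof.
move=> Hxy; have Hl := gp_last x y; have Hp := gp_path x y; have Hu := gp_uniq x y.
case Hg: (gp x y) Hl Hp Hu => [|n q] /=.
  by move=> Exy; rewrite Exy eqxx in Hxy.
move=> _ /andP [Hn _] /andP [Hx _]; exists n; split => //.
  by rewrite inE eqxx.
by apply: contraNneq Hx => ->; rewrite inE eqxx.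
Qed.

Lemma interior_node x y z : z \in x :: gp x y -> z != x -> z != y -> is_node e z.
Proof.
move=> Hz Hzx Hzy.
have [n1 [E1 M1 N1]] := head_nb Hzx.
have [n2 [E2 M2 N2]] := head_nb Hzy.
have M1' : n1 \in z :: gp z x by rewrite inE M1 orbT.
have M2' : n2 \in z :: gp z y by rewrite inE M2 orbT.
rewrite mem_geod_sym -(mem_pre _ Hz) in M1'.
rewrite -(mem_suf _ Hz) in M2'.
case/andP: M1' => A1 B1; case/andP: M2' => A2 B2.
have Hn : n1 != n2.
  apply/eqP => E; subst n2.
  have Ei : index n1 (x :: gp x y) = index z (x :: gp x y) by apply/eqP; rewrite eqn_leq B1 B2.
  have := nth_index x A1; rewrite Ei nth_index // => E.
  by rewrite E eqxx in N1.
rewrite /is_node /is_leaf /valency.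
suff : 2 <= #|[set u | e z u]| by case: #|_| => [|[|]].
have <- : #|[set n1; n2]| = 2 by rewrite cards2 Hn.
apply: subset_leq_card.
apply/subsetP => u; rewrite !inE => /orP [/eqP -> | /eqP ->] //.
Qed.

Lemma zip_nth_mem (x : T) p i : i < size p ->
  (nth x (x :: p) i, nth x p i) \in zip (x :: p) p.
Proof.
elim: p x i => [|a p IH] x [|i] //= Hi.
  by rewrite inE eqxx.
rewrite inE; apply/orP; right.
have Hi2 : i < size p by [].
have Hi3 : i < size (a :: p) by rewrite /= ltnS ltnW.
by have := IH a i Hi2; rewrite (set_nth_default a x Hi3) (set_nth_default a x Hi2).
Qed.

Lemma mem_zip2 (s t : seq T) a b : (a, b) \in zip s t -> b \in t.
Proof.
elim: s t => [|c s IH] [|d t] //=.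
rewrite inE => /orP [/eqP [_ ->] | /IH H]; rewrite inE ?eqxx ?H ?orbT //.
Qed.

Lemma mem_zip1 (s t : seq T) a b : (a, b) \in zip s t -> a \in s.
Proof.
elim: s t => [|c s IH] [|d t] //=.
rewrite inE => /orP [/eqP [-> _] | /IH H]; rewrite inE ?eqxx ?H ?orbT //.
Qed.

Lemma edge_on_geodE x y a b : a \in x :: gp x y -> e a b ->
  edge_on_geod e x y a b = (b \in x :: gp x y).
Proof.
move=> Ha Hab; apply/idP/idP.
  case/existsP=> n /existsP [p /andP [Hp Hz]].
  rewrite -(gpU Hp); case/orP: Hz => [/mem_zip2 H | /mem_zip1 H] //.
  by rewrite inE H orbT.
move=> Hb; apply/existsP; exists (Ordinal (gp_size x y)); apply/existsP.
exists (in_tuple (gp x y)); rewrite /= gpP /=.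
set L := x :: gp x y.
have Ea := nth_index x Ha; have Eb := nth_index x Hb.
have Ia := index_mem a L; have Ib := index_mem b L.
rewrite Ha in Ia; rewrite Hb in Ib.
case: (adj_index Ha Hb Hab) => H.
- apply/orP; left.
  have Hi : index a L < size (gp x y) by move: Ib; rewrite H.
  have := zip_nth_mem x Hi.
  have -> : nth x (gp x y) (index a L) = nth x L (index b L) by rewrite H.
  by rewrite -/L Ea Eb.
- apply/orP; right.
  have Hi : index b L < size (gp x y) by move: Ia; rewrite H.
  have := zip_nth_mem x Hi.
  have -> : nth x (gp x y) (index b L) = nth x L (index a L) by rewrite H.
  by rewrite -/L Ea Eb.
Qed.


Variable dw : T -> T -> nat.
Hypothesis wpos : forall v u : T, is_node e v -> e v u -> 0 < dw v u.

Definition G x y : {set T} := [set z | z \in x :: gp x y].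
Definition fS (S : {set T}) w := \prod_(n | e w n && (n \notin S)) dw w n.
Definition E (S : {set T}) := \prod_(w | is_node e w && (w \in S)) fS S w.

Lemma E_gt0 S : 0 < E S.
Proof.
apply: prodn_cond_gt0 => w /andP [Hw _].
by apply: prodn_cond_gt0 => n /andP [Hn _]; apply: wpos.
Qed.

Lemma dtot_gt0 v : is_node e v -> 0 < dtot e dw v.
Proof. by move=> Hv; apply: prodn_cond_gt0 => n Hn; apply: wpos. Qed.

Lemma G_sym x y : G x y = G y x.
Proof. by apply/setP => z; rewrite !in_set mem_geod_sym. Qed.

Lemma ellE u v : is_node e u -> is_node e v -> ell e dw u v = E (G u v).
Proof.
move=> Hu Hv; rewrite /ell /E; case: eqP => [<- | /eqP Huv].
  rewrite (eq_bigl (pred1 u)); last first.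
    move=> w; rewrite /G gp_refl !inE /=.
    by case: eqP => [->|]; rewrite ?Hu ?andbF.
  rewrite big_pred1_eq /fS /dtot; apply: eq_bigl => n.
  rewrite /G gp_refl !inE.
  case Hn: (e u n) => //=.
  by symmetry; apply/eqP => En; rewrite En eirr in Hn.
rewrite (eq_bigl (fun w => is_node e w && (w \in G u v))); last first.
  by move=> w; rewrite on_geodE /G inE.
apply: eq_bigr => w /andP [_ Hw]; rewrite /fS; apply: eq_bigl => n.
case Hn: (e w n) => //=.
by rewrite /G in_set in Hw; rewrite edge_on_geodE // /G in_set.
Qed.

Lemma E_union (A B : {set T}) c : c \in A -> c \in B ->
  (forall z, z \in A -> z \in B -> z = c) -> is_node e c ->
  (forall a b, a \in A -> b \in B -> e a b -> a = c \/ b = c) ->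
  E A * E B = dtot e dw c * E (A :|: B).
Proof.
move=> HA HB Hi Hc Hn.
have Dc : dtot e dw c = \prod_w (if w == c then dtot e dw c else 1).
  by rewrite -big_mkcond big_pred1_eq.
rewrite /E Dc (big_mkcond (fun w => is_node e w && (w \in A))) (big_mkcond (fun w => is_node e w && (w \in B))) (big_mkcond (fun w => is_node e w && (w \in A :|: B))) -!big_split.
apply: eq_bigr => w _ /=.
case: (eqVneq w c) => [-> | Hwc].
  rewrite Hc HA HB in_setU HA /=.
  rewrite /fS /dtot !big_mkcondr -!big_split; apply: eq_bigr => n Hcn /=.
  have Hnc : n != c by apply: contraTneq Hcn => ->; rewrite eirr.
  rewrite in_setU.
  case HnA: (n \in A); case HnB: (n \in B) => /=; rewrite ?muln1 ?mul1n //.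
  by rewrite (Hi n HnA HnB) eqxx in Hnc.
rewrite mul1n in_setU.
case Nw: (is_node e w) => /=; last by [].
case HwA: (w \in A); case HwB: (w \in B) => /=; rewrite ?muln1 ?mul1n //.
- by rewrite (Hi w HwA HwB) eqxx in Hwc.
- rewrite /fS; apply: eq_bigl => n; rewrite in_setU.
  case Hwn: (e w n) => //=; case HnB: (n \in B); rewrite ?orbF ?orbT //=.
  case: (Hn w n HwA HnB Hwn) => E1; first by rewrite E1 eqxx in Hwc.
  by rewrite E1 HA.
- rewrite /fS; apply: eq_bigl => n; rewrite in_setU.
  case Hwn: (e w n) => //=; case HnA: (n \in A); rewrite ?orbF ?orbT //=.
  case: (Hn n w HnA HwB (etrans (esym _ _) Hwn)) => E1; last by rewrite E1 eqxx in Hwc.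
  by rewrite -E1 HnA in HA *; rewrite E1 HB.
Qed.


Lemma E_split u v c : c \in u :: gp u v -> is_node e c ->
  E (G u c) * E (G c v) = dtot e dw c * E (G u v).
Proof.
move=> Hc Nc.
set L := u :: gp u v.
set k := index c L.
have MA a : (a \in G u c) = (a \in L) && (index a L <= k) by rewrite /G in_set -(mem_pre _ Hc).
have MB a : (a \in G c v) = (a \in L) && (k <= index a L) by rewrite /G in_set -(mem_suf _ Hc).
have Inj a : a \in L -> index a L = k -> a = c.
  by move=> Ha Hk; rewrite -(nth_index u Ha) Hk nth_index.
have -> : G u v = G u c :|: G c v.
  apply/setP => a; rewrite in_setU MA MB /G in_set -/L.
  by case: (a \in L) => //=; rewrite leq_total.
apply: E_union => //.
- by rewrite MA Hc leqnn.
- by rewrite MB Hc leqnn.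
- move=> z; rewrite MA MB => /andP [Hz H1] /andP [_ H2].
  by apply: Inj => //; apply/eqP; rewrite eqn_leq H1 H2.
- move=> a b; rewrite MA MB => /andP [Ha H1] /andP [Hb H2] Hab.
  case: (adj_index Ha Hb Hab) => H.
  + case: (ltngtP (index a L) k) => H3.
    * by right; apply: Inj => //; apply/eqP; rewrite eqn_leq H2 H; rewrite H3.
    * by move: H1; rewrite leqNgt H3.
    * by left; apply: Inj.
  + left; apply: Inj => //; apply/eqP; rewrite eqn_leq H1 H /=.
    by apply: leq_trans H2 _.
Qed.


Lemma E_edge x m : e x m -> is_node e x -> is_node e m ->
  E (G x m) * (dw x m * dw m x) = dtot e dw x * dtot e dw m.
Proof.
move=> Hxm Nx Nm.
have Dxm : x != m by apply: contraTneq Hxm => ->; rewrite eirr.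
have Hg : gp x m = [:: m].
  by symmetry; apply: gpU; rewrite /simple_path /= Hxm eqxx !inE Dxm.
have Gxm : G x m = [set x; m].
  by apply/setP => z; rewrite /G Hg !inE.
have fx : fS [set x; m] x = \prod_(n | e x n && (n != m)) dw x n.
  apply: eq_bigl => n; rewrite !inE; case Hn: (e x n) => //=.
  have : n != x by apply: contraTneq Hn => ->; rewrite eirr.
  by move/negbTE => ->.
have fm : fS [set x; m] m = \prod_(n | e m n && (n != x)) dw m n.
  apply: eq_bigl => n; rewrite !inE; case Hn: (e m n) => //=.
  have : n != m by apply: contraTneq Hn => ->; rewrite eirr.
  by move/negbTE => ->; rewrite orbF.
have Ex : E [set x; m] = fS [set x; m] x * fS [set x; m] m.
  rewrite /E (eq_bigl (fun w => w \in [set x; m])); last first.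
    move=> w; rewrite !inE; case: (eqVneq w x) => [->|]; rewrite ?Nx //=.
    by move=> _; case: (eqVneq w m) => [->|]; rewrite ?Nm ?andbF.
  rewrite (bigD1 x) ?inE ?eqxx //= (eq_bigl (pred1 m)) ?big_pred1_eq // => w.
  rewrite !inE /=; case: (eqVneq w m) => [->|]; rewrite ?andbT ?andbF //.
  by rewrite orbT eq_sym Dxm. by rewrite orbF; case: (w == x).
have Hmx : e m x by rewrite esym.
rewrite Gxm Ex fx fm /dtot (bigD1 m Hxm) /= (bigD1 x Hmx) /=.
lia.
Qed.

Hypothesis edc : forall u v : T, is_node e u -> is_node e v -> e u v ->
  ell e dw u v < dw u v * dw v u.

Lemma key_edge x m : e x m -> is_node e x -> is_node e m ->
  E (G x m) * E (G x m) < dtot e dw x * dtot e dw m.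
Proof.
move=> Hxm Nx Nm.
rewrite -(E_edge Hxm Nx Nm) ltn_pmul2l ?E_gt0 //.
by rewrite -ellE //; apply: edc.
Qed.

Lemma key n x y : #|G x y| <= n -> x != y -> is_node e x -> is_node e y ->
  E (G x y) * E (G x y) < dtot e dw x * dtot e dw y.
Proof.
elim: n x y => [|n IH] x y Hc Hxy Nx Ny.
  have Hx : x \in G x y by rewrite /G in_set mem_head.
  by move: Hc; rewrite leqn0 => /eqP/cards0_eq H; rewrite H inE in Hx.
have [m [Hxm Hm Hmx]] := head_nb Hxy.
have Lm : m \in x :: gp x y by rewrite inE Hm orbT.
case: (eqVneq m y) => [Emy | Hmy].
  by subst m; apply: key_edge.
have Nm := interior_node Lm Hmx Hmy.
have Hp : G m y \proper G x y.
  apply/properP; split.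
    apply/subsetP => a; rewrite /G !in_set -(mem_suf _ Lm).
    by case/andP.
  exists x; first by rewrite /G in_set mem_head.
  rewrite /G in_set -(mem_suf _ Lm) mem_head /= eqxx /=.
  by rewrite eq_sym (negbTE Hmx).
have IHm := IH m y _ Hmy Nm Ny.
have {IHm} h2 : E (G m y) * E (G m y) < dtot e dw m * dtot e dw y.
  by apply: IHm; have := proper_card Hp; lia.
have h1 := key_edge Hxm Nx Nm.
have Hs := E_split Lm Nm.
have H := ltn_mul h1 h2.
rewrite mulnACA Hs in H.
have Pm := dtot_gt0 Nm.
have : dtot e dw m * dtot e dw m * (E (G x y) * E (G x y)) <
       dtot e dw m * dtot e dw m * (dtot e dw x * dtot e dw y).
  move: H; set a := dtot e dw m; set b := E (G x y); set c := dtot e dw x; set d := dtot e dw y.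
  have -> : a * b * (a * b) = a * a * (b * b) by lia.
  have -> : c * a * (a * d) = a * a * (c * d) by lia.
  by [].
by rewrite ltn_pmul2l // muln_gt0 Pm.
Qed.


Lemma median u v w : exists c,
  [/\ c \in u :: gp u v, c \in u :: gp u w & c \in v :: gp v w].
Proof.
set L1 := u :: gp u v.
pose P := fun k => (k < size L1) && (nth u L1 k \in u :: gp u w).
have ex : exists k, P k by exists 0; rewrite /P /= mem_head.
have bnd : forall k, P k -> k <= size L1 by move=> k /andP [/ltnW].
case: (ex_maxnP ex bnd) => k /andP [Hk Hc] Hmax.
set c := nth u L1 k.
have Hc1 : c \in L1 by apply: mem_nth.
have Ic : index c L1 = k by apply: index_uniq => //; apply: gp_uniq.
exists c; split => //.
apply: concat_geod => z Hz1 Hz2.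
move: Hz1; rewrite -(mem_suf _ Hc1) -/L1 Ic => /andP [Hz Hkz].
move: Hz2; rewrite -(mem_suf _ Hc) => /andP [Hzw _].
have Pz : P (index z L1) by rewrite /P index_mem Hz nth_index.
have Hzk := Hmax _ Pz.
have : index z L1 = k by apply/eqP; rewrite eqn_leq Hzk Hkz.
by move=> Ez; rewrite /c -Ez nth_index.
Qed.

Lemma main_in u v w : is_node e u -> is_node e v -> is_node e w ->
    ell e dw u v * ell e dw u w <= dtot e dw u * ell e dw v w /\
    (ell e dw u v * ell e dw u w = dtot e dw u * ell e dw v w <->
     on_geod e v w u).
Proof.
move=> Nu Nv Nw.
rewrite !ellE // on_geodE.
case Hu: (u \in v :: gp v w).
  have := E_split Hu Nu; rewrite G_sym => ->.
  by split => //.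
have [c [C1 C2 C3]] := median u v w.
have Hcu : u != c by apply: contraFneq Hu => ->.
have Nc : is_node e c.
  case: (eqVneq c v) => [-> // | Hcv]; case: (eqVneq c w) => [-> // | Hcw].
  exact: interior_node C3 Hcv Hcw.
have S1 := E_split C1 Nc.
have S2 := E_split C2 Nc.
have S3 := E_split C3 Nc; rewrite G_sym in S3.
have K := key (leqnn _) Hcu Nu Nc.
have Pc := dtot_gt0 Nc.
set a := E (G u c) in S1 S2 K; set b := E (G c v) in S1 S3; set g := E (G c w) in S2 S3.
set X := E (G u v) in S1 *; set Y := E (G u w) in S2 *; set Z := E (G v w) in S3 *.
set dc := dtot e dw c in S1 S2 S3 K Pc; set du := dtot e dw u in K *.
have E1 : dc * dc * (X * Y) = (a * a) * (b * g) by rewrite mulnACA -S1 -S2 mulnACA.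
have E2 : dc * dc * (du * Z) = (du * dc) * (b * g).
  rewrite S3; lia.
have Hlt : X * Y < du * Z.
  rewrite -(ltn_pmul2l (_ : 0 < dc * dc)); last by rewrite muln_gt0 Pc.
  by rewrite E1 E2 ltn_pmul2r // muln_gt0 !E_gt0.
split; first exact: ltnW.
split => // Heq; by rewrite Heq ltnn in Hlt.
Qed.

End Geo.

Unset Implicit Arguments.

Theorem proposition2p10 (T : finType) (e : rel T) (dw : T -> T -> nat) :
  splice_diagram e dw ->
  edge_determinant_condition e dw ->
  forall u v w : T, is_node e u -> is_node e v -> is_node e w ->
    ell e dw u v * ell e dw u w <= dtot e dw u * ell e dw v w /\
    (ell e dw u v * ell e dw u w = dtot e dw u * ell e dw v w <->
     on_geod e v w u).
Proof.
move=> [[esym [eirr euniq]] _ _ wpos] edc u v w Nu Nv Nw.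
by apply: main_in.
Qed.
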